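(* In the model of the context, if the lead time is deterministic, $L_t=L$ for all $t$ with a constant integer $L\ge0$, then $$BM=\left(\frac{2L^2}{n^2}+\frac{2L}{n}\right)(1-\rho^n)+1 .$$
   Context: Model. Fix $\mu_D\in\mathbb{R}$, $\rho\in(-1,1)$, and an i.i.d. sequence $(\epsilon_t)_{t\in\mathbb{Z}}$ with $E\epsilon_t=0$, $\operatorname{Var}\epsilon_t=\sigma^2\in(0,\infty)$. The demand $(D_t)$ is the stationary AR(1) process $D_t=\mu_D+\rho(D_{t-1}-\mu_D)+\epsilon_t$. Fix an integer $L^+\ge 0$ and integers $n,m\ge1$. Lead times $(L_t)$ take values in $\{0,\dots,L^+\}$. Forecasts: $\widehat{D}_t=\frac1n\sum_{i=1}^n D_{t-i}$, $\widehat{L}_t=\frac1m\sum_{i=1}^m L_{t-i-L^+}$; order $q_t=\widehat{L}_t\widehat{D}_t-\widehat{L}_{t-1}\widehat{D}_{t-1}+D_{t-1}$; $BM=\operatorname{Var}q_t/\operatorname{Var}D_t$. *)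

(* Defs.v *)
From Stdlib Require Import Reals ZArith.
Open Scope R_scope.

(* An abstract probability expectation: a class of integrable random
   variables (functions Omega -> R) on which the expectation is a positive,
   normalised linear functional.  Any probability space (Int = L^1,
   Ex = integral) is an instance. *)
Record ExpSpace (Omega : Type) := {
  Int : (Omega -> R) -> Prop;
  Ex  : (Omega -> R) -> R;
  Int_const : forall c : R, Int (fun _ => c);
  Int_add : forall f g, Int f -> Int g -> Int (fun w => f w + g w);
  Int_scal : forall (c : R) f, Int f -> Int (fun w => c * f w);
  Ex_const : forall c : R, Ex (fun _ => c) = c;
  Ex_add : forall f g, Int f -> Int g -> Ex (fun w => f w + g w) = Ex f + Ex g;
  Ex_scal : forall (c : R) f, Int f -> Ex (fun w => c * f w) = c * Ex f;
  Ex_pos : forall f, Int f -> (forall w, 0 <= f w) -> 0 <= Ex f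
}.
Arguments Int {Omega} _ _.
Arguments Ex {Omega} _ _.

Definition Var {Omega} (P : ExpSpace Omega) (X : Omega -> R) : R :=
  Ex P (fun w => (X w - Ex P X) ^ 2).

Definition Cov {Omega} (P : ExpSpace Omega) (X Y : Omega -> R) : R :=
  Ex P (fun w => (X w - Ex P X) * (Y w - Ex P Y)).

Fixpoint rsum (f : nat -> R) (n : nat) : R :=
  match n with
  | O => 0
  | S k => rsum f k + f k
  end.

Definition Dhat {Omega} (n : nat) (D : Z -> Omega -> R) (t : Z) : Omega -> R :=
  fun w => / INR n * rsum (fun i => D (t - Z.of_nat (S i))%Z w) n.

Definition Lhat {Omega} (m Lplus : nat) (L : Z -> Omega -> R) (t : Z) : Omega -> R :=
  fun w => / INR m * rsum (fun i => L (t - Z.of_nat (S i) - Z.of_nat Lplus)%Z w) m.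

Definition order {Omega} (n m Lplus : nat) (D L : Z -> Omega -> R) (t : Z)
  : Omega -> R :=
  fun w => Lhat m Lplus L t w * Dhat n D t w
           - Lhat m Lplus L (t - 1)%Z w * Dhat n D (t - 1)%Z w
           + D (t - 1)%Z w.

Definition BM {Omega} (P : ExpSpace Omega) (n m Lplus : nat)
  (D L : Z -> Omega -> R) (t : Z) : R :=
  Var P (order n m Lplus D L t) / Var P (D t).

(* Main.v *)
Require Import Defs.
From Stdlib Require Import Reals ZArith Lra Lia FunctionalExtensionality.
Open Scope R_scope.

Lemma Int_comb {Omega} (P : ExpSpace Omega) f g h a b c :
  Int P f -> Int P g -> Int P h -> Int P (fun w => a * f w + b * g w + c * h w).
Proof.
  intros Hf Hg Hh.
  apply (Int_add _ P); [apply (Int_add _ P)|]; apply (Int_scal _ P); auto.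
Qed.

Lemma Ex_comb {Omega} (P : ExpSpace Omega) f g h a b c :
  Int P f -> Int P g -> Int P h ->
  Ex P (fun w => a * f w + b * g w + c * h w) = a * Ex P f + b * Ex P g + c * Ex P h.
Proof.
  intros Hf Hg Hh.
  rewrite (Ex_add _ P).
  2: apply (Int_add _ P); apply (Int_scal _ P); auto.
  2: apply (Int_scal _ P); auto.
  rewrite (Ex_add _ P) by (apply (Int_scal _ P); auto).
  rewrite !(Ex_scal _ P) by auto. reflexivity.
Qed.

Definition P1 {Omega} (P : ExpSpace Omega) (D : Z -> Omega -> R) g :=
  Int P g /\ forall s, Int P (fun w => D s w * g w).
Definition P2 {Omega} (P : ExpSpace Omega) (D : Z -> Omega -> R) f :=
  Int P f /\ forall g, P1 P D g -> Int P (fun w => f w * g w).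

Lemma Int_c {Omega} (P : ExpSpace Omega) : Int P (fun _ => 1).
Proof. apply (Int_const _ P). Qed.

Lemma P2_comb {Omega} (P : ExpSpace Omega) D f g a b c :
  P2 P D f -> P2 P D g -> P2 P D (fun w => a * f w + b * g w + c).
Proof.
  intros [Hf Hf2] [Hg Hg2]. split.
  - replace (fun w => a * f w + b * g w + c) with (fun w => a * f w + b * g w + c * (fun _ => 1) w)
      by (apply functional_extensionality; intro; simpl; ring).
    apply Int_comb; auto. apply Int_c.
  - intros h [Hh Hh2].
    replace (fun w => (a * f w + b * g w + c) * h w) with
      (fun w => a * (fun w => f w * h w) w + b * (fun w => g w * h w) w + c * h w)
      by (apply functional_extensionality; intro; simpl; ring).
    apply Int_comb; auto; [apply Hf2|apply Hg2]; split; auto.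
Qed.

Lemma P2_P1 {Omega} (P : ExpSpace Omega) D f : P2 P D f -> (forall s, P1 P D (D s)) -> P1 P D f.
Proof.
  intros [Hf Hf2] HD. split; auto. intro s.
  replace (fun w => D s w * f w) with (fun w => f w * D s w)
    by (apply functional_extensionality; intro; ring).
  apply Hf2; auto.
Qed.

Lemma P2_mul {Omega} (P : ExpSpace Omega) D f g : (forall s, P1 P D (D s)) ->
  P2 P D f -> P2 P D g -> Int P (fun w => f w * g w).
Proof. intros HD Hf Hg. apply Hf. apply P2_P1; auto. Qed.

Lemma Cov_sym {Omega} (P : ExpSpace Omega) X Y : Cov P X Y = Cov P Y X.
Proof. unfold Cov. f_equal. apply functional_extensionality; intro; ring. Qed.

Lemma Var_Cov {Omega} (P : ExpSpace Omega) X : Var P X = Cov P X X.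
Proof. unfold Var, Cov. f_equal. apply functional_extensionality; intro; ring. Qed.

Lemma Cov_expand {Omega} (P : ExpSpace Omega) D f g : (forall s, P1 P D (D s)) ->
  P2 P D f -> P2 P D g -> Cov P f g = Ex P (fun w => f w * g w) - Ex P f * Ex P g.
Proof.
  intros HD Hf Hg. unfold Cov.
  assert (Hfg := P2_mul P D f g HD Hf Hg).
  destruct Hf as [Hf _], Hg as [Hg _].
  replace (fun w => (f w - Ex P f) * (g w - Ex P g)) with
    (fun w => (fun w => 1 * (fun w => f w * g w) w + (- Ex P g) * f w + (- Ex P f) * g w) w
              + (fun _ => Ex P f * Ex P g) w)
    by (apply functional_extensionality; intro; simpl; ring).
  rewrite (Ex_add _ P).
  - rewrite Ex_comb by auto. rewrite (Ex_const _ P). ring.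
  - apply Int_comb; auto.
  - apply (Int_const _ P).
Qed.

Lemma Cov_comb_l {Omega} (P : ExpSpace Omega) D f g h a b c : (forall s, P1 P D (D s)) ->
  P2 P D f -> P2 P D g -> P2 P D h ->
  Cov P (fun w => a * f w + b * g w + c) h = a * Cov P f h + b * Cov P g h.
Proof.
  intros HD Hf Hg Hh.
  rewrite !(Cov_expand P D) by (auto; apply P2_comb; auto).
  assert (Hfh := P2_mul P D f h HD Hf Hh).
  assert (Hgh := P2_mul P D g h HD Hg Hh).
  destruct Hf as [Hf _], Hg as [Hg _], Hh as [Hh _].
  replace (fun w => (a * f w + b * g w + c) * h w) with
    (fun w => a * (fun w => f w * h w) w + b * (fun w => g w * h w) w + c * h w)
    by (apply functional_extensionality; intro; simpl; ring).
  replace (fun w => a * f w + b * g w + c) with (fun w => a * f w + b * g w + c * (fun _ => 1) w)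
      by (apply functional_extensionality; intro; simpl; ring).
  rewrite !Ex_comb by (auto; apply Int_c). rewrite (Ex_const _ P). ring.
Qed.

Lemma Var_nonneg {Omega} (P : ExpSpace Omega) D f : (forall s, P1 P D (D s)) ->
  P2 P D f -> 0 <= Var P f.
Proof.
  intros HD Hf. rewrite Var_Cov. unfold Cov.
  apply (Ex_pos _ P).
  - assert (H : P2 P D (fun w => 1 * f w + 0 * f w + - Ex P f)) by (apply P2_comb; auto).
    assert (H2 := P2_mul P D _ _ HD H H).
    replace (fun w => (f w - Ex P f) * (f w - Ex P f)) with
      (fun w => (1 * f w + 0 * f w + - Ex P f) * (1 * f w + 0 * f w + - Ex P f))
      by (apply functional_extensionality; intro; ring). exact H2.
  - intro w. cbv beta. apply Rle_0_sqr.
Qed.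

Lemma Cov_bound {Omega} (P : ExpSpace Omega) D f g : (forall s, P1 P D (D s)) ->
  P2 P D f -> P2 P D g -> 2 * Rabs (Cov P f g) <= Var P f + Var P g.
Proof.
  intros HD Hf Hg.
  assert (H1 := Var_nonneg P D (fun w => 1 * f w + 1 * g w + 0) HD (P2_comb P D f g 1 1 0 Hf Hg)).
  assert (H2 := Var_nonneg P D (fun w => 1 * f w + (-1) * g w + 0) HD (P2_comb P D f g 1 (-1) 0 Hf Hg)).
  rewrite Var_Cov in H1, H2.
  rewrite (Cov_comb_l P D) in H1, H2 by (auto; apply P2_comb; auto).
  rewrite (Cov_sym P f (fun w => 1 * f w + 1 * g w + 0)),
          (Cov_sym P g (fun w => 1 * f w + 1 * g w + 0)) in H1.
  rewrite (Cov_sym P f (fun w => 1 * f w + -1 * g w + 0)),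
          (Cov_sym P g (fun w => 1 * f w + -1 * g w + 0)) in H2.
  rewrite !(Cov_comb_l P D) in H1, H2 by auto.
  rewrite !Var_Cov. rewrite (Cov_sym P g f) in H1, H2.
  unfold Rabs; destruct Rcase_abs; lra.
Qed.

Lemma rsum_ext f g n : (forall i, f i = g i) -> rsum f n = rsum g n.
Proof. intros H; induction n; simpl; auto. rewrite IHn, H; auto. Qed.

Lemma rsum_const c n : rsum (fun _ => c) n = INR n * c.
Proof. induction n; simpl rsum. simpl; ring. rewrite IHn, S_INR; ring. Qed.

Lemma rsum_tele g n : rsum (fun i => g (S i)) n - rsum (fun i => g (S (S i))) n = g 1%nat - g (S n).
Proof. induction n; simpl rsum. ring. lra. Qed.

Theorem mainTheorem5
  (Omega : Type) (P : ExpSpace Omega)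
  (muD rho sigma2 : R) (Lplus n m Lc : nat)
  (eps D Lt : Z -> Omega -> R)
  (Hrho : -1 < rho < 1)
  (Hsigma : 0 < sigma2)
  (Hn : (1 <= n)%nat) (Hm : (1 <= m)%nat)
  (Heps_int : forall s, Int P (eps s))
  (HD_int : forall s, Int P (D s))
  (Heps2_int : forall s u, Int P (fun w => eps s w * eps u w))
  (HD2_int : forall s u, Int P (fun w => D s w * D u w))
  (HDeps_int : forall s u, Int P (fun w => D s w * eps u w))
  (Heps_mean : forall s, Ex P (eps s) = 0)
  (Heps_var : forall s, Var P (eps s) = sigma2)
  (Heps_unc : forall s u, s <> u -> Cov P (eps s) (eps u) = 0)
  (HAR : forall t w, D t w = muD + rho * (D (t - 1)%Z w - muD) + eps t w)
  (Hstat_mean : forall t, Ex P (D t) = Ex P (D 0%Z))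
  (Hstat_cov : forall t h, Cov P (D (t + h)%Z) (D t) = Cov P (D h) (D 0%Z))
  (HLc : (Lc <= Lplus)%nat)
  (HLt : forall t w, Lt t w = INR Lc) :
  forall t : Z,
    BM P n m Lplus D Lt t
    = (2 * INR Lc ^ 2 / INR n ^ 2 + 2 * INR Lc / INR n) * (1 - rho ^ n) + 1.
Proof.
  intro t.
  assert (HP1 : forall s, P1 P D (D s)) by (intro s; split; auto).
  assert (HP2 : forall s, P2 P D (D s)) by (intro s; split; auto; intros g [_ Hg]; apply Hg).
  assert (Heps_eq : forall s, eps s = (fun w => 1 * D s w + (- rho) * D (s - 1)%Z w + (rho * muD - muD))).
  { intro s; apply functional_extensionality; intro w; rewrite (HAR s w); ring. }
  assert (HD_eq : forall s, D s = (fun w => rho * D (s - 1)%Z w + 1 * eps s w + (muD - rho * muD))).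
  { intro s; apply functional_extensionality; intro w; rewrite (HAR s w) at 1; ring. }
  assert (HP2e : forall s, P2 P D (eps s)) by (intro s; rewrite Heps_eq; apply P2_comb; auto).
  set (g0 := Cov P (D 0%Z) (D 0%Z)).
  assert (Hg0 : forall u, Cov P (D u) (D u) = g0).
  { intro u. unfold g0. rewrite <- (Hstat_cov u 0%Z). rewrite Z.add_0_r. reflexivity. }
  assert (Hee : forall s, Cov P (eps s) (eps s) = sigma2) by (intro s; rewrite <- Var_Cov; auto).
  assert (Hrec : forall s u, Cov P (eps s) (D u) = rho * Cov P (eps s) (D (u - 1)%Z) + Cov P (eps s) (eps u)).
  { intros s u. rewrite Cov_sym. rewrite (HD_eq u) at 1.
    rewrite (Cov_comb_l P D) by auto. rewrite !(Cov_sym P (eps s)). ring. }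
  assert (Hiter : forall s k u, (u < s)%Z -> Cov P (eps s) (D u) = rho ^ k * Cov P (eps s) (D (u - Z.of_nat k)%Z)).
  { intros s k; induction k; intros u Hu.
    - simpl. rewrite Z.sub_0_r. ring.
    - rewrite IHk by auto. rewrite (Hrec s (u - Z.of_nat k)%Z).
      rewrite (Heps_unc s) by lia.
      replace (u - Z.of_nat k - 1)%Z with (u - Z.of_nat (S k))%Z by lia. simpl. ring. }
  assert (Hbnd : forall s v, 2 * Rabs (Cov P (eps s) (D v)) <= sigma2 + g0).
  { intros s v. rewrite <- (Hee s), <- (Hg0 v), <- !Var_Cov. apply (Cov_bound P D); auto. }
  assert (Hzero : forall s u, (u < s)%Z -> Cov P (eps s) (D u) = 0).
  { intros s u Hu. set (c := Cov P (eps s) (D u)).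
    destruct (Req_dec c 0) as [|Hc]; auto. exfalso.
    assert (HK : 0 <= sigma2 + g0).
    { specialize (Hbnd s u). pose proof (Rabs_pos c). unfold c in *. lra. }
    assert (Hca : 0 < Rabs c) by (apply Rabs_pos_lt; auto).
    destruct (pow_lt_1_zero rho) with (y := Rabs c / (sigma2 + g0 + 1)) as [N HN].
    { unfold Rabs; destruct Rcase_abs; lra. }
    { apply Rdiv_lt_0_compat; lra. }
    specialize (HN N (le_n N)).
    assert (E := Hiter s N u Hu). fold c in E.
    specialize (Hbnd s (u - Z.of_nat N)%Z).
    assert (Habs : Rabs c = Rabs (rho ^ N) * Rabs (Cov P (eps s) (D (u - Z.of_nat N)%Z)))
      by (rewrite E; apply Rabs_mult).
    pose proof (Rabs_pos (rho ^ N)).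
    pose proof (Rabs_pos (Cov P (eps s) (D (u - Z.of_nat N)%Z))).
    assert (Hy : Rabs c / (sigma2 + g0 + 1) * (sigma2 + g0 + 1) = Rabs c) by (field; lra).
    nra. }
  assert (Hcovk : forall u k, Cov P (D (u + Z.of_nat k)%Z) (D u) = rho ^ k * g0).
  { intros u k; induction k.
    - simpl. rewrite Z.add_0_r, Hg0. ring.
    - rewrite (HD_eq (u + Z.of_nat (S k))%Z) at 1.
      rewrite (Cov_comb_l P D) by auto.
      rewrite (Hzero _ u) by lia.
      replace (u + Z.of_nat (S k) - 1)%Z with (u + Z.of_nat k)%Z by lia.
      rewrite IHk. simpl. ring. }
  assert (Hg0pos : 0 < g0).
  { assert (E : g0 = rho * rho * g0 + sigma2).
    { rewrite <- (Hg0 t) at 1. rewrite (HD_eq t) at 1.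
      rewrite (Cov_comb_l P D) by auto.
      assert (H1 : Cov P (D (t - 1)%Z) (D t) = rho * g0).
      { rewrite Cov_sym. replace t with (t - 1 + Z.of_nat 1)%Z at 1 by (simpl; lia). rewrite Hcovk. ring. }
      rewrite H1. rewrite Hrec. rewrite (Hzero t (t - 1)%Z) by lia. rewrite Hee. ring. }
    assert (Hr : 0 < 1 - rho * rho) by (destruct Hrho; assert (0 < (1-rho)*(1+rho)) by (apply Rmult_lt_0_compat; lra); nra).
    destruct (Rle_lt_dec g0 0) as [Hle|]; auto.
    assert (0 <= - g0 * (1 - rho * rho)) by (apply Rmult_le_pos; lra). nra. }
  assert (Hq : order n m Lplus D Lt t =
     (fun w => (1 + INR Lc / INR n) * D (t - 1)%Z w + (- (INR Lc / INR n)) * D (t - Z.of_nat (S n))%Z w + 0)).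
  { apply functional_extensionality; intro w. unfold order.
    assert (HL : forall s, Lhat m Lplus Lt s w = INR Lc).
    { intro s. unfold Lhat. rewrite (rsum_ext _ (fun _ => INR Lc)) by (intro; apply HLt).
      rewrite rsum_const. field. apply not_0_INR; lia. }
    rewrite !HL.
    assert (Hn0 : INR n <> 0) by (apply not_0_INR; lia).
    assert (HT := rsum_tele (fun i => D (t - Z.of_nat i)%Z w) n).
    unfold Dhat.
    rewrite (rsum_ext (fun i => D (t - 1 - Z.of_nat (S i))%Z w) (fun i => D (t - Z.of_nat (S (S i)))%Z w))
      by (intro i; f_equal; lia).
    cbv beta in HT. change (Z.of_nat 1) with 1%Z in HT.
    set (A := rsum (fun i => D (t - Z.of_nat (S i))%Z w) n) in *.
    set (B := rsum (fun i => D (t - Z.of_nat (S (S i)))%Z w) n) in *.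
    replace (INR Lc * (/ INR n * A) - INR Lc * (/ INR n * B)) with (INR Lc / INR n * (A - B)) by (field; auto).
    rewrite HT. simpl. ring. }
  unfold BM. rewrite Hq. rewrite !Var_Cov, Hg0.
  set (A := 1 + INR Lc / INR n). set (B := - (INR Lc / INR n)).
  rewrite (Cov_comb_l P D) by (auto; apply P2_comb; auto).
  rewrite (Cov_sym P (D (t - 1)%Z)), (Cov_sym P (D (t - Z.of_nat (S n))%Z)).
  rewrite !(Cov_comb_l P D) by auto.
  rewrite !Hg0.

  replace (t - 1)%Z with (t - Z.of_nat (S n) + Z.of_nat n)%Z by lia.
  rewrite (Cov_sym P (D (t - Z.of_nat (S n))%Z)).
  assert (Hn0 : INR n <> 0) by (apply not_0_INR; lia). assert (g0 <> 0) by lra.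
  rewrite Hcovk. unfold A, B. field. auto.
Qed.
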